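(* Let $G$ be a polarized and anchored progressive graph. Then there exists at most one planar order $\prec$ on $E(G)$ such that: (1) $e_1\to e_2$ implies $e_1\prec e_2$; (2) for every vertex $v$ and $e_1,e_2\in I(v)$, $e_1<e_2$ in $I(v)$ iff $e_1\prec e_2$, and for $e_1,e_2\in O(v)$, $e_1<e_2$ in $O(v)$ iff $e_1\prec e_2$; (3) for $i_1,i_2\in I(G)$, $i_1<i_2$ in $I(G)$ iff $i_1\prec i_2$, and for $o_1,o_2\in O(G)$, $o_1<o_2$ in $O(G)$ iff $o_1\prec o_2$.
   Context: A progressive graph is a finite directed acyclic graph (parallel edges allowed) in which every source and every sink has degree one; degree-one vertices are boundary vertices. $I(G)$ (input edges) is the set of edges whose initial vertex is a boundary vertex, $O(G)$ (output edges) those whose terminal vertex is a boundary vertex. For a vertex $v$, $I(v)$ and $O(v)$ are its sets of incoming and outgoing edges. For edges write $e\to e'$ if $e\neq e'$ and there is a directed path whose first edge is $e$ and last edge is $e'$. A planar order on $G$ is a linear order $\prec$ on $E(G)$ such that (P1) $e_1\to e_2$ implies $e_1\prec e_2$; (P2) if $e_1\prec e_2\prec e_3$ and $e_1\to e_3$ then $e_1\to e_2$ or $e_2\to e_3$. $G$ is polarized if for every vertex $v$, linear orders $<$ on $I(v)$ and on $O(v)$ are given; $G$ is anchored if linear orders $<$ on $I(G)$ and on $O(G)$ are given. *)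

(* Defs.v *)
From mathcomp Require Import all_boot.
Set Implicit Arguments. Unset Strict Implicit. Unset Printing Implicit Defensive.

Section Progressive.
Variables (V E : finType) (src tgt : E -> V).

Definition in_edges (v : V) : pred E := fun e => tgt e == v.
Definition out_edges (v : V) : pred E := fun e => src e == v.
Definition indeg (v : V) : nat := #|in_edges v|.
Definition outdeg (v : V) : nat := #|out_edges v|.
Definition deg (v : V) : nat := indeg v + outdeg v.

Definition eadj : rel E := fun e f => tgt e == src f.

Definition epath (e e' : E) : bool := (e != e') && connect eadj e e'.

Definition acyclic : Prop := forall e f, eadj e f -> ~~ connect eadj f e.

Definition is_boundary (v : V) : bool := deg v == 1.

Definition progressive : Prop :=
  acyclic /\ forall v, (indeg v == 0) || (outdeg v == 0) -> deg v == 1.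

Definition input_edges : pred E := fun e => is_boundary (src e).
Definition output_edges : pred E := fun e => is_boundary (tgt e).

Definition lin_order_on (S : pred E) (r : rel E) : Prop :=
  [/\ {in S, forall x, ~~ r x x},
      {in S & &, forall x y z, r x y -> r y z -> r x z} &
      {in S &, forall x y, x != y -> r x y || r y x}].

Definition planar_order (prec : rel E) : Prop :=
  [/\ lin_order_on predT prec,
      (forall e1 e2, epath e1 e2 -> prec e1 e2) &
      (forall e1 e2 e3, prec e1 e2 -> prec e2 e3 -> epath e1 e3 ->
          epath e1 e2 || epath e2 e3)].

Definition polarized (ltI ltO : V -> rel E) : Prop :=
  forall v, lin_order_on (in_edges v) (ltI v) /\ lin_order_on (out_edges v) (ltO v).

Definition anchored (ltIG ltOG : rel E) : Prop :=
  lin_order_on input_edges ltIG /\ lin_order_on output_edges ltOG.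

Definition compatible_order (ltI ltO : V -> rel E) (ltIG ltOG : rel E)
    (prec : rel E) : Prop :=
  [/\ (forall e1 e2, epath e1 e2 -> prec e1 e2),
      (forall v, {in in_edges v &, forall e1 e2, ltI v e1 e2 = prec e1 e2} /\
                 {in out_edges v &, forall e1 e2, ltO v e1 e2 = prec e1 e2}) &
      ({in input_edges &, forall i1 i2, ltIG i1 i2 = prec i1 i2} /\
       {in output_edges &, forall o1 o2, ltOG o1 o2 = prec o1 o2})].

End Progressive.

(* Main.v *)
Require Import Defs.
From mathcomp Require Import all_boot.
Set Implicit Arguments. Unset Strict Implicit. Unset Printing Implicit Defensive.

Section Aux.
Variables (V E : finType) (src tgt : E -> V).
Local Notation eadj := (eadj src tgt).
Local Notation epath := (epath src tgt).

Lemma last_step x y : connect eadj x y -> x != y -> exists2 z, eadj z y & connect eadj x z.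
Proof.
move/connectP=> [p]; elim/last_ind: p => [|p z _] /=.
  by move=> _ ->; rewrite eqxx.
rewrite rcons_path last_rcons => /andP[Hp Hz] -> _.
exists (last x p) => //; apply/connectP; exists p => //.
Qed.

Lemma first_step x y : connect eadj x y -> x != y -> exists2 z, eadj x z & connect eadj z y.
Proof.
move/connectP=> [[|z p]] /=; first by move=> _ ->; rewrite eqxx.
move=> /andP[Hxz Hp] -> _; exists z => //; apply/connectP; exists p => //.
Qed.

Hypothesis Hac : acyclic src tgt.

Lemma no_cycle x y : connect eadj x y -> connect eadj y x -> x = y.
Proof.
move=> Hxy Hyx; apply/eqP; apply/negPn/negP => Hne.
have [z Hxz Hzy] := first_step Hxy Hne.
by move: (Hac Hxz); rewrite (connect_trans Hzy Hyx).
Qed.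

Lemma eadj_neq x y : eadj x y -> x != y.
Proof. by move=> H; apply/eqP => E0; subst; move: (Hac H); rewrite connect0. Qed.

Definition anc x := #|[set y | connect eadj y x]|.

Lemma anc_lt g e : eadj g e -> anc g < anc e.
Proof.
move=> H; apply: proper_card; apply/properP; split.
  apply/subsetP => y; rewrite !inE => Hy; exact: connect_trans Hy (connect1 H).
exists e; first by rewrite inE connect0.
by rewrite inE; apply/negP => Heg; move: (Hac H); rewrite Heg.
Qed.

Variable p : rel E.
Hypothesis Hp : planar_order src tgt p.

Lemma po_irr x : ~~ p x x.
Proof. by case: Hp => [[H _ _] _ _]; apply: H. Qed.
Lemma po_trans x y z : p x y -> p y z -> p x z.
Proof. by case: Hp => [[_ H _] _ _]; apply: H. Qed.
Lemma po_tot x y : x != y -> p x y || p y x.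
Proof. by case: Hp => [[_ _ H] _ _]; apply: H. Qed.
Lemma po_path x y : epath x y -> p x y.
Proof. by case: Hp => [_ H _]; apply: H. Qed.
Lemma po_P2 x y z : p x y -> p y z -> epath x z -> epath x y || epath y z.
Proof. by case: Hp => [_ _ H]; apply: H. Qed.

Lemma po_neg x y : x != y -> p x y = ~~ p y x.
Proof.
move=> Hne; case Hxy: (p x y); case Hyx: (p y x) => //=.
  by move: (po_irr x); rewrite (po_trans Hxy Hyx).
by move: (po_tot Hne); rewrite Hxy Hyx.
Qed.

Lemma po_pred g e f : eadj g e -> ~~ epath g f -> ~~ epath f e -> e != f ->
  p e f = p g f.
Proof.
move=> Hge Hgf Hfe Hef.
have Hgne : g != e := eadj_neq Hge.
have Hpge : epath g e by rewrite /epath Hgne connect1.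
have Hgf' : g != f by apply/eqP=> E0; subst; rewrite Hpge in Hfe.
case Hg: (p g f).
  apply/negPn/negP => Hn.
  have Hfe' : p f e by move: (po_tot Hef); rewrite (negbTE Hn).
  by move: (po_P2 Hg Hfe' Hpge); rewrite (negbTE Hgf) (negbTE Hfe).
have Hfg : p f g by move: (po_tot Hgf'); rewrite Hg.
have Hfe' := po_trans Hfg (po_path Hpge).
by rewrite (po_neg Hef) Hfe'.
Qed.

End Aux.

Theorem proposition2p14 (V E : finType) (src tgt : E -> V)
    (ltI ltO : V -> rel E) (ltIG ltOG : rel E) :
  progressive src tgt ->
  polarized src tgt ltI ltO ->
  anchored src tgt ltIG ltOG ->
  forall prec1 prec2 : rel E,
    planar_order src tgt prec1 ->
    compatible_order src tgt ltI ltO ltIG ltOG prec1 ->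
    planar_order src tgt prec2 ->
    compatible_order src tgt ltI ltO ltIG ltOG prec2 ->
    forall e1 e2, prec1 e1 e2 = prec2 e1 e2.
Proof.
move=> [Hac Hsrc] _ _ p1 p2 Hp1 [_ Hv1 [HI1 _]] Hp2 [_ Hv2 [HI2 _]].
suff: forall n e f, anc src tgt e + anc src tgt f < n -> p1 e f = p2 e f.
  by move=> H e f; apply: (H _ e f (ltnSn _)).
elim=> // n IH e f Hn.
case: (eqVneq e f) => [->|Hef].
  by rewrite (negbTE (po_irr Hp1 _)) (negbTE (po_irr Hp2 _)).
case Hepf: (epath src tgt e f).
  by rewrite (po_path Hp1 Hepf) (po_path Hp2 Hepf).
case Hfpe: (epath src tgt f e).
  by rewrite (po_neg Hp1 Hef) (po_neg Hp2 Hef) (po_path Hp1 Hfpe) (po_path Hp2 Hfpe).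
case: (eqVneq (src e) (src f)) => Hs.
  have [_ H1] := Hv1 (src e); have [_ H2] := Hv2 (src e).
  have He : e \in out_edges src (src e) by rewrite unfold_in /out_edges eqxx.
  have Hf : f \in out_edges src (src e) by rewrite unfold_in /out_edges Hs eqxx.
  by rewrite -(H1 _ _ He Hf) (H2 _ _ He Hf).
case: (pickP [pred g | eadj src tgt g e & ~~ epath src tgt g f]) => [g /andP[Hg Hgf]|Hnoe].
  rewrite (po_pred Hac Hp1 Hg Hgf (negbT Hfpe) Hef) (po_pred Hac Hp2 Hg Hgf (negbT Hfpe) Hef).
  apply: IH; rewrite ltnS in Hn; apply: leq_trans Hn; rewrite ltn_add2r.
  exact: anc_lt.
have Hfe : f != e by rewrite eq_sym.
case: (pickP [pred g | eadj src tgt g f & ~~ epath src tgt g e]) => [g /andP[Hg Hge]|Hnof].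
  rewrite (po_neg Hp1 Hef) (po_neg Hp2 Hef).
  rewrite (po_pred Hac Hp1 Hg Hge (negbT Hepf) Hfe) (po_pred Hac Hp2 Hg Hge (negbT Hepf) Hfe).
  have Hge' : g != e by apply/eqP => E0; subst; rewrite /epath Hef connect1 in Hepf.
  congr negb.
  apply: IH; rewrite ltnS in Hn; apply: leq_trans Hn; rewrite [X in X < _]addnC ltn_add2l.
  exact: anc_lt.
have Ae : forall g, eadj src tgt g e -> epath src tgt g f.
  by move=> g Hg; move: (Hnoe g) => /=; rewrite Hg /= => /negbFE.
have Af : forall g, eadj src tgt g f -> epath src tgt g e.
  by move=> g Hg; move: (Hnof g) => /=; rewrite Hg /= => /negbFE.
have noin : forall x, (forall g, ~~ eadj src tgt g x) -> input_edges src tgt x.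
  move=> x Hx; rewrite /input_edges /is_boundary; apply: Hsrc; apply/orP; left.
  rewrite /indeg; apply/eqP/eq_card0 => g; rewrite unfold_in /in_edges.
  by apply/negP => /eqP Hg; move: (Hx g); rewrite /eadj Hg eqxx.
have step : forall g y, epath src tgt g y -> exists2 h, eadj src tgt h y & connect (eadj src tgt) g h.
  by move=> g y /andP[Hne Hc]; apply: last_step.
case: (pickP [pred g | eadj src tgt g e]) => [g Hg|He0]; last first.
  case: (pickP [pred g | eadj src tgt g f]) => [g Hg|Hf0]; last first.
    have Ie : input_edges src tgt e by apply: noin => g; move: (He0 g) => /= ->.
    have If : input_edges src tgt f by apply: noin => g; move: (Hf0 g) => /= ->.
    by rewrite -(HI1 _ _ Ie If) (HI2 _ _ Ie If).
  have [h Hh _] := step _ _ (Af _ Hg); by move: (He0 h) => /=; rewrite Hh.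
exfalso.
have [h Hh Hgh] := step _ _ (Ae _ Hg).
have [k Hk Hhk] := step _ _ (Af _ Hh).
have Hgk := connect_trans Hgh Hhk.
have Htg : tgt g = tgt k by move: Hg Hk; rewrite /eadj => /eqP -> /eqP ->.
case: (eqVneq g k) => [E0|Hgk'].
  subst k; have E1 := no_cycle Hac Hgh Hhk; subst h.
  by move: Hg Hh; rewrite /eadj => /eqP -> /eqP; apply/eqP.
have [z Hgz Hzk] := first_step Hgk Hgk'.
have Hkz : eadj src tgt k z by move: Hgz; rewrite /eadj Htg.
by move: (Hac _ _ Hkz); rewrite Hzk.
Qed.
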